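(* Let $h:\mathcal X\times\mathcal S\to\mathcal Y$ be a measurable classifier with values in a finite set $\mathcal Y\subset\mathbb R$, and suppose $h(X,S)$ satisfies statistical parity, i.e. $h(X,S)$ is independent of $S$. Then there exists a transport-based counterfactual model $\Pi$ such that $h$ is $\Pi$-counterfactually fair.
   Context: $(X,S)$ is a random pair with $X$ valued in $\mathcal X\subseteq\mathbb R^d$ and $S$ valued in a finite set $\mathcal S\subset\mathbb R$ with $\mathbb P(S=s)>0$ for all $s$; $\mu_s:=\mathcal L(X\mid S=s)$. $\Pi(P,Q)$ denotes the set of probability measures on $\mathbb R^d\times\mathbb R^d$ with marginals $P$ and $Q$; $t(x,x'):=(x',x)$; $I$ is the identity and $(I\times I)(x)=(x,x)$; $T_\sharp P:=P\circ T^{-1}$. A transport-based counterfactual model is a collection $\Pi=\{\pi_{\langle s'|s\rangle}\}_{s,s'\in\mathcal S}$ of probability measures on $\mathbb R^d\times\mathbb R^d$ such that for all $s,s'$: (i) $\pi_{\langle s'|s\rangle}\in\Pi(\mu_s,\mu_{s'})$; (ii) $\pi_{\langle s|s\rangle}=(I\times I)_\sharp\mu_s$; (iii) $\pi_{\langle s|s'\rangle}=t_\sharp\pi_{\langle s'|s\rangle}$. A predictor $h$ is $\Pi$-counterfactually fair if for every $s,s'\in\mathcal S$ and $\pi_{\langle s'|s\rangle}$-almost every $(x,x')$, $h(x,s)=h(x',s')$. *)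

(* Defs.v *)
From HB Require Import structures.
From mathcomp Require Import all_boot all_order all_algebra.
From mathcomp Require Import all_classical all_reals all_analysis.
Set Implicit Arguments. Unset Strict Implicit. Unset Printing Implicit Defensive.
Import Order.TTheory GRing.Theory Num.Theory.
Local Open Scope classical_set_scope.
Local Open Scope ring_scope.

(* R^d is represented by d.-tuple R, with the product (= Borel) sigma-algebra. *)

Definition indep_rv (R : realType) (dO : measure_display) (Omega : measurableType dO)
  (P : probability Omega R) (U V : Omega -> R) : Prop :=
  forall A B : set R, measurable A -> measurable B ->
    P (U @^-1` A `&` V @^-1` B) = (P (U @^-1` A) * P (V @^-1` B))%E.

Definition cond_law (R : realType) (dO : measure_display) (Omega : measurableType dO)
  (P : probability Omega R) (d : nat) (X : Omega -> d.-tuple R) (S : Omega -> R)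
  (s : R) : set (d.-tuple R) -> \bar R :=
  fun A => (P (X @^-1` A `&` S @^-1` [set s]) * ((fine (P (S @^-1` [set s])))^-1)%:E)%E.

Definition is_coupling (R : realType) (d : nat)
  (pi : probability (d.-tuple R * d.-tuple R)%type R)
  (mu nu : set (d.-tuple R) -> \bar R) : Prop :=
  (forall A : set (d.-tuple R), measurable A -> pushforward pi fst A = mu A) /\
  (forall A : set (d.-tuple R), measurable A -> pushforward pi snd A = nu A).

(* Transport-based counterfactual model, indexed by (s', s) as pi_<s'|s> = Pi s' s. *)
Definition transport_cf_model (R : realType) (dO : measure_display)
  (Omega : measurableType dO) (P : probability Omega R) (d : nat)
  (X : Omega -> d.-tuple R) (S : Omega -> R) (Sset : seq R)
  (Pi : R -> R -> probability (d.-tuple R * d.-tuple R)%type R) : Prop :=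
  forall s s', s \in Sset -> s' \in Sset ->
    [/\ is_coupling (Pi s' s) (cond_law P X S s) (cond_law P X S s'),
        (forall A, measurable A ->
           Pi s s A = pushforward (cond_law P X S s) (fun x => (x, x)) A) &
        (forall A, measurable A ->
           Pi s s' A = pushforward (Pi s' s) (fun z => (z.2, z.1)) A)].

Definition cf_fair (R : realType) (d : nat) (Sset : seq R)
  (Pi : R -> R -> probability (d.-tuple R * d.-tuple R)%type R)
  (h : d.-tuple R -> R -> R) : Prop :=
  forall s s', s \in Sset -> s' \in Sset ->
    {ae (Pi s' s), forall z : (d.-tuple R * d.-tuple R)%type, h z.1 s = h z.2 s'}.

(* Main.v *)
Require Import Defs.
From HB Require Import structures.
From mathcomp Require Import all_boot all_order all_algebra.
From mathcomp Require Import all_classical all_reals all_analysis.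
From mathcomp Require Import ring.
Import Order.TTheory GRing.Theory Num.Theory.
Local Open Scope classical_set_scope.
Local Open Scope ring_scope.

Definition rpf d d' (T : measurableType d) (T' : measurableType d') (R : realType)
  (mu : {measure set T -> \bar R}) (D : set T) (mD : measurable D)
  (f : T -> T') (mf : measurable_fun setT f) (A : set T') : \bar R :=
  mu (f @^-1` A `&` D).
Arguments rpf {d d' T T' R} mu {D} mD {f} mf.

Lemma rpf0 d d' (T : measurableType d) (T' : measurableType d') (R : realType)
  (mu : {measure set T -> \bar R}) (D : set T) (mD : measurable D)
  (f : T -> T') (mf : measurable_fun setT f) : rpf mu mD mf set0 = 0%E.
Proof. by rewrite /rpf preimage_set0 set0I measure0. Qed.

Lemma rpf_ge0 d d' (T : measurableType d) (T' : measurableType d') (R : realType)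
  (mu : {measure set T -> \bar R}) (D : set T) (mD : measurable D)
  (f : T -> T') (mf : measurable_fun setT f) A : (0 <= rpf mu mD mf A)%E.
Proof. exact: measure_ge0. Qed.

Lemma rpf_sa d d' (T : measurableType d) (T' : measurableType d') (R : realType)
  (mu : {measure set T -> \bar R}) (D : set T) (mD : measurable D)
  (f : T -> T') (mf : measurable_fun setT f) : semi_sigma_additive (rpf mu mD mf).
Proof.
have -> : rpf mu mD mf = pushforward (mrestr mu mD) f by [].
exact: measure_semi_sigma_additive.
Qed.

HB.instance Definition _ d d' (T : measurableType d) (T' : measurableType d') (R : realType)
  (mu : {measure set T -> \bar R}) (D : set T) (mD : measurable D)
  (f : T -> T') (mf : measurable_fun setT f) :=
  isMeasure.Build _ _ _ (rpf mu mD mf) (@rpf0 _ _ _ _ _ mu _ mD _ mf) (@rpf_ge0 _ _ _ _ _ mu _ mD _ mf) (@rpf_sa _ _ _ _ _ mu _ mD _ mf).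

Local Open Scope ereal_scope.

Lemma mnorm1E d (T : measurableType d) (R : realType)
  (mu : {measure set T -> \bar R}) (P0 : probability T R) U :
  mu setT = 1 -> mnormalize mu P0 U = mu U.
Proof.
move=> h1; rewrite /mnormalize h1 onee_eq0 /= invr1 mule1 //.
Qed.

Lemma nrpfE d d' (T : measurableType d) (T' : measurableType d') (R : realType)
  (mu : probability T R) (D : set T) (mD : measurable D)
  (f : T -> T') (mf : measurable_fun setT f) (P0 : probability T' R) U :
  mu D != 0 -> mu D \is a fin_num ->
  mnormalize (rpf mu mD mf) P0 U = mu (f @^-1` U `&` D) * (fine (mu D))^-1%:E.
Proof.
move=> h0 hf; rewrite /mnormalize /= /rpf preimage_setT setTI.
by rewrite (negbTE h0) /=; case: (mu D) hf h0.
Qed.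

Lemma partition_sum d (T : measurableType d) (R : realType)
  (mu : probability T R) (Z : T -> R) (mZ : measurable_fun setT Z)
  (ys : seq R) (B : set T) :
  uniq ys -> measurable B -> (forall w, B w -> Z w \in ys) ->
  mu B = \sum_(y <- ys) mu (B `&` Z @^-1` [set y]).
Proof.
elim: ys B => [|y ys IH] B /= uys mB cov.
  rewrite big_nil; suff -> : B = set0 by rewrite measure0.
  by apply/seteqP; split => // w /cov.
move: uys => /andP[yns uys].
have mZy : measurable (Z @^-1` [set y]).
  by rewrite -[X in measurable X]setTI; apply: mZ.
rewrite big_cons.
rewrite -{1}(setIT B) -(setUv (Z @^-1` [set y])) setIUr measureU; first last.
- by rewrite setIACA setICr setI0.
- by apply: measurableI => //; apply: measurableC.
- exact: measurableI.
congr (_ + _).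

have mB' : measurable (B `&` ~` Z @^-1` [set y]).
  by apply: measurableI => //; apply: measurableC.
have cov' : forall w, (B `&` ~` Z @^-1` [set y]) w -> Z w \in ys.
  move=> w [Bw Zw]; move: (cov w Bw); rewrite inE => /orP[/eqP|//].
  by move=> /= E; exfalso; apply: Zw.
apply: etrans (IH _ uys mB' cov') _.
rewrite big_seq_cond [RHS]big_seq_cond; apply: eq_bigr => y' /andP[y'in _].
congr (mu _); apply/seteqP; split => w /=.
  by move=> [[]].
move=> [Bw Zw]; split => //; split => // Zy; apply/negP: yns.
by rewrite -Zy Zw y'in.
Qed.

Arguments partition_sum {d T R} mu {Z} mZ {ys B}.

Lemma meas_exists2 d (T : measurableType d) (R : realType)
  (F : R -> set T) (l : seq R) :
  (forall y, y \in l -> measurable (F y)) ->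
  measurable [set z | exists2 y, y \in l & F y z].
Proof.
elim: l => [|y l IH] hF.
  by rewrite (_ : [set z | _] = set0) //; apply/seteqP; split => // z [].
rewrite (_ : [set z | _] = F y `|` [set z | exists2 y', y' \in l & F y' z]).
  apply: measurableU; first by apply: hF; rewrite mem_head.
  by apply: IH => y' hy'; apply: hF; rewrite in_cons hy' orbT.
apply/seteqP; split => z /=.
  move=> [y']; rewrite in_cons => /orP[/eqP -> |h] Fz; [by left|right].
  by exists y'.
move=> [Fz|[y' h Fz]]; [exists y => //; rewrite mem_head|exists y' => //].
  by []. by rewrite in_cons h orbT.
Qed.

Lemma meas_seqset (R : realType) (l : seq R) :
  measurable [set s : R | s \in l].
Proof.
rewrite (_ : [set s : R | s \in l] = [set z | exists2 y, y \in l & [set y] z]).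
  by apply: meas_exists2 => y _; apply: measurable_set1.
by apply/seteqP; split => z /=; [move=> h; exists z|move=> [y h ->]].
Qed.

Lemma msum_seq d (T : measurableType d) (R : realType)
  (m : R -> {measure set T -> \bar R}) (ys : seq R) U :
  msum (fun k => m (nth 0%R ys k)) (size ys) U = \sum_(y <- ys) m y U.
Proof.
rewrite /msum (big_nth 0%R) big_mkord //.
Qed.

Local Close Scope ereal_scope.

Theorem proposition8 (R : realType) (dO : measure_display) (Omega : measurableType dO)
  (P : probability Omega R) (d : nat)
  (Xset : set (d.-tuple R)) (Sset Yset : seq R)
  (X : Omega -> d.-tuple R) (S : Omega -> R)
  (h : d.-tuple R -> R -> R) :
  measurable Xset ->
  measurable_fun setT X -> measurable_fun setT S ->
  (forall w, Xset (X w)) -> (forall w, S w \in Sset) ->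
  (forall s, s \in Sset -> (0 < P (S @^-1` [set s]))%E) ->
  measurable_fun (Xset `*` [set s | s \in Sset]) (fun z => h z.1 z.2) ->
  (forall x s, Xset x -> s \in Sset -> h x s \in Yset) ->
  indep_rv P (fun w => h (X w) (S w)) S ->
  exists Pi : R -> R -> probability (d.-tuple R * d.-tuple R)%type R,
    transport_cf_model P X S Sset Pi /\ cf_fair Sset Pi h.
Proof.
move=> mXset mX mS hXset hSset hpos mh hY hind.
pose Z w := h (X w) (S w).
have mSS : measurable [set s : R | s \in Sset] := @meas_seqset _ Sset.
have mZ : measurable_fun setT Z.
  have mXS : measurable_fun setT (fun w => (X w, S w)) := measurable_fun_pair mX mS.
  apply: (measurable_comp (measurableX mXset mSS) _ mh mXS).
  by move=> _ [w _ <-]; split; [exact: hXset | exact: hSset].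
have mE s : measurable (S @^-1` [set s]).
  by rewrite -[X in measurable X]setTI; exact: (mS measurableT _ (measurable_set1 s)).
have mF y : measurable (Z @^-1` [set y]).
  by rewrite -[X in measurable X]setTI; exact: (mZ measurableT _ (measurable_set1 y)).
have mEF s y : measurable (S @^-1` [set s] `&` Z @^-1` [set y]) := measurableI _ _ (mE s) (mF y).
have mXX : measurable_fun setT (fun w => (X w, X w)) := measurable_fun_pair mX mX.
have finP A : measurable A -> P A \is a fin_num.
  move=> mA; rewrite ge0_fin_numE ?measure_ge0//.
  by apply: (le_lt_trans (probability_le1 P mA)); exact: ltry.
pose t0 : d.-tuple R := nseq_tuple d 0.
pose P1 : probability (d.-tuple R) R := @dirac _ _ t0 R.
pose P2 : probability (d.-tuple R * d.-tuple R)%type R := @dirac _ _ (t0, t0) R.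
pose Q s y : probability (d.-tuple R) R := mnormalize (rpf P (mEF s y) mX) P1.
pose ys := undup Yset.
pose wv y := fine (P (Z @^-1` [set y])).
have wv0 y : 0 <= wv y by apply: fine_ge0; exact: measure_ge0.
pose Prod s' s : probability (d.-tuple R * d.-tuple R)%type R := mnormalize (msum (fun k => mscale (NngNum (wv0 (nth 0%R ys k)))
   ((Q s (nth 0%R ys k)) \x (Q s' (nth 0%R ys k)))%E) (size ys)) P2.
pose Diag s : probability (d.-tuple R * d.-tuple R)%type R := mnormalize (rpf P (mE s) mXX) P2.
have Zys w : Z w \in ys by rewrite mem_undup; apply: hY; [exact: hXset| exact: hSset].
have uys : uniq ys := undup_uniq Yset.
have PZ y : P (Z @^-1` [set y]) = (wv y)%:E by rewrite fineK //; exact: finP.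
have PE s : P (S @^-1` [set s]) = (fine (P (S @^-1` [set s])))%:E by rewrite fineK //; exact: finP.
have Pind y s : P (Z @^-1` [set y] `&` S @^-1` [set s]) =
    (P (Z @^-1` [set y]) * P (S @^-1` [set s]))%E.
  exact: (hind _ _ (measurable_set1 y) (measurable_set1 s)).
pose ps s := fine (P (S @^-1` [set s])).
have PEs s : P (S @^-1` [set s]) = (ps s)%:E by rewrite fineK //; exact: finP.
have ps0 s : s \in Sset -> ps s != 0.
  move=> sS; have := hpos s sS; rewrite PEs lte_fin => h0.
  by rewrite gt_eqF.
have Qval s y U : s \in Sset -> wv y != 0 -> measurable U ->
    Q s y U = (P (X @^-1` U `&` (S @^-1` [set s] `&` Z @^-1` [set y])) *
              ((wv y * ps s)^-1)%:E)%E.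
  move=> sS wy0 mU.
  have hEF : P (S @^-1` [set s] `&` Z @^-1` [set y]) = (wv y * ps s)%:E.
    by rewrite setIC Pind PZ PEs EFinM.
  have hn : P (S @^-1` [set s] `&` Z @^-1` [set y]) != 0%E.
    by rewrite hEF eqe mulf_neq0 // ps0.
  apply: etrans (@nrpfE _ _ _ _ _ P _ (mEF s y) _ mX P1 U hn (finP _ (mEF s y))) _.
  by congr (_ * (_ ^-1)%:E)%E; exact: (congr1 fine hEF).
have alg (a w p : R) : w != 0 -> p != 0 -> w * (a * (w * p)^-1) = a / p.
  move=> w0 p0; field; apply/andP; split => //.
have Marg s A : s \in Sset -> measurable A ->
    (\sum_(y <- ys) ((wv y)%:E * Q s y A))%E = cond_law P X S s A.
  move=> sS mA.
  have mB : measurable (X @^-1` A `&` S @^-1` [set s]).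
    by apply: measurableI => //; rewrite -[X in measurable X]setTI; exact: (mX measurableT _ mA).
  rewrite /cond_law (partition_sum P mZ uys mB (fun w _ => Zys w)).
  rewrite ge0_sume_distrl; last by move=> y _; exact: measure_ge0.
  apply: eq_bigr => y _.
  have [wy0|wy0] := eqVneq (wv y) 0.
    have h0 : P (X @^-1` A `&` S @^-1` [set s] `&` Z @^-1` [set y]) = 0%E.
      apply: (@subset_measure0 _ _ _ P _ (Z @^-1` [set y])).
      + exact: measurableI.
      + exact: mF.
      + by move=> w [].
      + exact: (etrans (PZ y) (congr1 EFin wy0)).
    by rewrite wy0 mul0e h0 mul0e.
  rewrite Qval // setIA.
  rewrite -(fineK (finP _ (measurableI _ _ mB (mF y)))) -!EFinM.
  congr EFin; apply: alg => //; exact: ps0.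
have Tot : (\sum_(y <- ys) (wv y)%:E)%E = 1%E.
  have := partition_sum P mZ uys measurableT (fun w _ => Zys w).
  rewrite probability_setT => ->; apply: eq_bigr => y _.
  by rewrite setTI PZ.
have Qprod1 s s' y : ((Q s y) \x (Q s' y))%E setT = 1%E.
  exact: probability_setT.
have ProdE s' s U : measurable U ->
    Prod s' s U = (\sum_(y <- ys) ((wv y)%:E * ((Q s y) \x (Q s' y))%E U))%E.
  move=> mU.
  have msumE V : msum (fun k => mscale (NngNum (wv0 (nth 0%R ys k)))
      ((Q s (nth 0%R ys k)) \x (Q s' (nth 0%R ys k)))%E) (size ys) V =
      (\sum_(y <- ys) ((wv y)%:E * ((Q s y) \x (Q s' y))%E V))%E.
    exact: (@msum_seq _ _ _ (fun y => mscale (NngNum (wv0 y)) ((Q s y) \x (Q s' y))%E) ys V).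
  have H1 : msum (fun k => mscale (NngNum (wv0 (nth 0%R ys k)))
      ((Q s (nth 0%R ys k)) \x (Q s' (nth 0%R ys k)))%E) (size ys) setT = 1%E.
    rewrite msumE -Tot; apply: eq_bigr => y _.
    by rewrite Qprod1 mule1.
  exact: (etrans (@mnorm1E _ _ _ _ P2 U H1) (msumE U)).
have DiagE s U : s \in Sset -> measurable U ->
    Diag s U = (P ((fun w => (X w, X w)) @^-1` U `&` S @^-1` [set s]) * ((ps s)^-1)%:E)%E.
  move=> sS mU.
  have hn : P (S @^-1` [set s]) != 0%E by rewrite PEs eqe ps0.
  exact: (@nrpfE _ _ _ _ _ P _ (mE s) _ mXX P2 U hn (finP _ (mE s))).
have swapE s s' y A : measurable A ->
    ((Q s' y) \x (Q s y))%E A = ((Q s y) \x (Q s' y))%E ((fun z => (z.2, z.1)) @^-1` A).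
  move=> mA.
  have msw : measurable_fun setT (fun z : (d.-tuple R * d.-tuple R)%type => (z.2, z.1)).
    exact: measurable_swap.
  have rect B C : measurable B -> measurable C ->
      rpf ((Q s y) \x (Q s' y))%E (@measurableT _ _) msw (B `*` C) = (Q s' y B * Q s y C)%E.
    move=> mB mC; rewrite /rpf setIT.
    have -> : (fun z : (d.-tuple R * d.-tuple R)%type => (z.2, z.1)) @^-1` (B `*` C) = C `*` B.
      by apply/seteqP; split => z /= [].
    exact: (etrans (@product_measure1E _ _ _ _ _ (Q s y) (Q s' y) C B mC mB) (muleC _ _)).
  apply: etrans (@product_measure_unique _ _ _ _ R (Q s' y) (Q s y) _ rect A mA) _.
  exact: (congr1 ((Q s y) \x (Q s' y))%E (setIT _)).
have mfst (A : set (d.-tuple R)) : measurable A ->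
    measurable (fst @^-1` A : set (d.-tuple R * d.-tuple R)).
  by move=> mA; rewrite -setXT; apply: measurableX.
have msnd (A : set (d.-tuple R)) : measurable A ->
    measurable (snd @^-1` A : set (d.-tuple R * d.-tuple R)).
  by move=> mA; rewrite -setTX; apply: measurableX.
have mswp (A : set (d.-tuple R * d.-tuple R)) : measurable A ->
    measurable ((fun z : (d.-tuple R * d.-tuple R)%type => (z.2, z.1)) @^-1` A).
  move=> mA; rewrite -[X in measurable X]setTI.
  have msw : measurable_fun setT (fun z : (d.-tuple R * d.-tuple R)%type => (z.2, z.1)).
    exact: measurable_swap.
  exact: (msw measurableT _ mA).
have prodA s s' y A : measurable A -> ((Q s y) \x (Q s' y))%E (A `*` setT) = Q s y A.
  move=> mA; apply: etrans (@product_measure1E _ _ _ _ _ (Q s y) (Q s' y) A setT mA measurableT) _.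
  exact: (etrans (congr1 (fun x => Q s y A * x)%E (probability_setT (Q s' y))) (mule1 _)).
have prodB s s' y A : measurable A -> ((Q s y) \x (Q s' y))%E (setT `*` A) = Q s' y A.
  move=> mA; apply: etrans (@product_measure1E _ _ _ _ _ (Q s y) (Q s' y) setT A measurableT mA) _.
  exact: (etrans (congr1 (fun x => x * Q s' y A)%E (probability_setT (Q s y))) (mul1e _)).
exists (fun s' s => if s' == s then Diag s else Prod s' s).
split.
  move=> s s' sS s'S; split.
  - have [es|ns] := eqVneq s' s.
      rewrite -es /=.
      split => A mA; rewrite /pushforward DiagE //; [exact: mfst|exact: msnd].
    rewrite /=.
    split => A mA; rewrite /pushforward ProdE; [|exact: mfst| |exact: msnd].
      rewrite -(Marg s A) //; apply: eq_bigr => y _.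
      by rewrite -setXT prodA.
    rewrite -(Marg s' A) //; apply: eq_bigr => y _.
    by rewrite -setTX prodB.
  - by move=> A mA; rewrite /= eqxx DiagE.
  - move=> A mA; rewrite /pushforward; cbv beta.
    have [es|ns] := eqVneq s s'.
      rewrite -es ?eqxx !DiagE //.
      exact: mswp.
    rewrite (ProdE s s' A mA) (ProdE s' s _ (mswp A mA)).
    by apply: eq_bigr => y _; rewrite (swapE s s' y A mA).
have PEF s y : P (S @^-1` [set s] `&` Z @^-1` [set y]) = (wv y * ps s)%:E.
  by rewrite setIC Pind PZ PEs EFinM.
pose Ay s y := [set x : d.-tuple R | Xset x /\ h x s = y].
have mAy s y : s \in Sset -> measurable (Ay s y).
  move=> sS.
  have mD := mh (measurableX mXset mSS) _ (measurable_set1 y).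
  have mp : measurable_fun setT (fun x : d.-tuple R => (x, s)) := pair2_measurable s.
  suff -> : Ay s y = (fun x : d.-tuple R => (x, s)) @^-1`
      ((Xset `*` [set s | s \in Sset]) `&` (fun z => h z.1 z.2) @^-1` [set y]).
    rewrite -[X in measurable X]setTI; exact: (mp measurableT _ mD).
  apply/seteqP; split => x /=.
    by move=> [Xx e]; split; first split.
  by move=> [[Xx _] e]; split.
have Q1 s y : s \in Sset -> wv y != 0 -> Q s y (Ay s y) = 1%E.
  move=> sS wy0; rewrite Qval //; last exact: mAy.
  have -> : X @^-1` Ay s y `&` (S @^-1` [set s] `&` Z @^-1` [set y]) =
      S @^-1` [set s] `&` Z @^-1` [set y].
    apply/seteqP; split => w /=; first by move=> [].
    move=> [Sw Zw]; split => //; split; first exact: hXset.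
    by rewrite -Sw.
  by rewrite PEF -EFinM divff // mulf_neq0 // ps0.
pose G s s' := [set z : (d.-tuple R * d.-tuple R)%type |
  exists2 y, y \in ys & (Ay s y `*` Ay s' y) z].
move=> s s' sS s'S.
have mG : measurable (G s s').
  apply: (@meas_exists2 _ _ R (fun y => Ay s y `*` Ay s' y) ys).
  by move=> y _; apply: measurableX; apply: mAy.
exists (~` G s s'); split.
- exact: measurableC.
- have [es|ns] := eqVneq s' s.
    move: mG; rewrite es => mG.
    rewrite DiagE //; last exact: measurableC.
    rewrite (_ : _ `&` _ = set0) ?measure0 ?mul0e //.
    apply/seteqP; split => w // [/= nG _]; apply: nG.
    exists (h (X w) s); first by rewrite mem_undup; apply: hY.
    by rewrite /setX /=; split; split => //; exact: hXset.
  rewrite (ProdE s' s _ (measurableC mG)) big_seq; apply: big1 => y yin.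
  have [wy0|wy0] := eqVneq (wv y) 0; first by rewrite wy0 mul0e.
  suff -> : ((Q s y) \x (Q s' y))%E (~` G s s') = 0%E by rewrite mule0.
  have mAA : measurable (Ay s y `*` Ay s' y) by apply: measurableX; apply: mAy.
  apply: (@subset_measure0 _ _ _ ((Q s y) \x (Q s' y))%E _ (~` (Ay s y `*` Ay s' y))).
  + exact: measurableC.
  + exact: measurableC.
  + by move=> z nG AA; apply: nG; exists y.
  have e3 : ((Q s y) \x (Q s' y))%E (Ay s y `*` Ay s' y) = 1%E.
    apply: etrans (@product_measure1E _ _ _ _ _ (Q s y) (Q s' y) _ _ (mAy s y sS) (mAy s' y s'S)) _.
    exact: (etrans (congr2 (fun a b => a * b)%E (Q1 s y sS wy0) (Q1 s' y s'S wy0)) (mule1 _)).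
  apply: etrans (@probability_setC _ _ _ ((Q s y) \x (Q s' y))%E _ mAA) _.
  by apply: etrans (congr1 (fun a => 1 - a)%E e3) _; rewrite subee.
- move=> z /= nh Gz; apply: nh; case: Gz => y _ [[_ e1] [_ e2]].
  by rewrite e1 e2.
Qed.
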